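(* Let $z\in\mathbb{R}^n$, $\lambda_1,\lambda_2>0$, $l\le0\le u$ in $\mathbb{R}^n$, $\omega_i(\alpha)=\lambda_2|\alpha|_0+\delta_{[l_i,u_i]}(\alpha)$, $H(0)=-\lambda_1$, $H(s)=\min_{y\in\mathbb{R}^s}\{\frac12\|y-z_{1:s}\|^2+\lambda_1\sum_{j=1}^{s-1}|y_j-y_{j+1}|_0+\sum_{j=1}^s\omega_j(y_j)\}$ for $s\in[n]$, and $P_s(i,\alpha)=H(i)+\frac12\|\alpha\mathbf{1}-z_{i+1:s}\|^2+\sum_{j=i+1}^s\omega_j(\alpha)+\lambda_1$ for $i\in[0\!:\!s-1]$, $\alpha\in\mathbb{R}$. For each $s\in[n]$ let $P_s^*(\alpha)=\min_{i\in[0:s-1]}P_s(i,\alpha)$. Then: (i) for all $\alpha\in\mathbb{R}$, $P_1^*(\alpha)=\frac12(\alpha-z_1)^2+\omega_1(\alpha)$ and, for $s\in[2\!:\!n]$, $$P_s^*(\alpha)=\min\Big\{P_{s-1}^*(\alpha),\ \min_{\alpha'\in\mathbb{R}}P_{s-1}^*(\alpha')+\lambda_1\Big\}+\tfrac12(\alpha-z_s)^2+\omega_s(\alpha);$$ (ii) let $\mathcal{R}_1^0=\mathbb{R}$ and, for $s\in[2\!:\!n]$, $\mathcal{R}_s^{s-1}=\{\alpha\in\mathbb{R}: P_{s-1}^*(\alpha)\ge\min_{\alpha'\in\mathbb{R}}P_{s-1}^*(\alpha')+\lambda_1\}$ and $\mathcal{R}_s^i=\mathcal{R}_{s-1}^i\cap(\mathcal{R}_s^{s-1})^c$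 for $i\in[0\!:\!s-2]$. Then (a) for each $s\in[2\!:\!n]$, $\bigcup_{i\in[0:s-1]}\mathcal{R}_s^i=\mathbb{R}$ and $\mathcal{R}_s^i\cap\mathcal{R}_s^j=\emptyset$ for all $i\neq j$ in $[0\!:\!s-1]$; (b) for each $s\in[n]$ and $i\in[0\!:\!s-1]$, $P_s^*(\alpha)=P_s(i,\alpha)$ whenever $\alpha\in\mathcal{R}_s^i$.
   Context: $|t|_0=0$ if $t=0$ and $1$ otherwise; $\delta_{[a,b]}$ is the indicator of $[a,b]$; $[j\!:\!k]=\{j,\dots,k\}$, $[n]=[1\!:\!n]$, $z_{j:k}=(z_j,\dots,z_k)$, $\mathbf 1$ the all-ones vector; $(\cdot)^c$ denotes complement in $\mathbb{R}$. *)

(* Defs.v *)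
(* R : realType, extended reals \bar R for the
   indicator functions delta_[l_i,u_i] (value +oo outside the box). *)
From HB Require Import structures.
From mathcomp Require Import all_boot all_order all_algebra.
From mathcomp Require Import all_classical all_reals ereal.
Set Implicit Arguments. Unset Strict Implicit. Unset Printing Implicit Defensive.
Import Order.TTheory GRing.Theory Num.Theory.
Local Open Scope classical_set_scope.
Local Open Scope ring_scope.
Local Open Scope ereal_scope.

(* vectors z, l, u in R^n are sequences nat -> R indexed 1..n (only
   indices 1..n are ever used). *)

Definition omega (R : realType) (lam2 : R) (l u : nat -> R) (i : nat) (a : R)
  : \bar R :=
  (lam2 * (a != 0)%:R)%:E + (if ((l i <= a) && (a <= u i))%R then 0 else +oo).

(* objective of H(s) at y (only y_1..y_s matter) *)
Definition Hobj (R : realType) (lam1 lam2 : R) (z l u : nat -> R) (s : nat)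
  (y : nat -> R) : \bar R :=
  ((2^-1 * \sum_(1 <= j < s.+1) (y j - z j) ^+ 2)
   + lam1 * \sum_(1 <= j < s) (y j != y j.+1)%:R)%R%:E
  + \sum_(1 <= j < s.+1) omega lam2 l u j (y j).

Definition H (R : realType) (lam1 lam2 : R) (z l u : nat -> R) (s : nat)
  : \bar R :=
  if s == 0%N then (- lam1)%:E
  else ereal_inf [set Hobj lam1 lam2 z l u s y | y in [set: nat -> R]].

Definition P (R : realType) (lam1 lam2 : R) (z l u : nat -> R) (s i : nat)
  (a : R) : \bar R :=
  H lam1 lam2 z l u i
  + (2^-1 * \sum_(i.+1 <= j < s.+1) (a - z j) ^+ 2)%R%:E
  + \sum_(i.+1 <= j < s.+1) omega lam2 l u j a
  + lam1%:E.

Definition Pstar (R : realType) (lam1 lam2 : R) (z l u : nat -> R) (s : nat)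
  (a : R) : \bar R :=
  \big[Order.min/+oo]_(0 <= i < s) P lam1 lam2 z l u s i a.

Definition Rtop (R : realType) (lam1 lam2 : R) (z l u : nat -> R) (s : nat)
  : set R :=
  [set a | ereal_inf (range (Pstar lam1 lam2 z l u s.-1)) + lam1%:E
           <= Pstar lam1 lam2 z l u s.-1 a].

(* Regions R_s^i; set0 outside the index range i in [0:s-1]. *)
Fixpoint Rg (R : realType) (lam1 lam2 : R) (z l u : nat -> R) (s i : nat)
  : set R :=
  match s with
  | 0%N => set0
  | 1%N => if i == 0%N then setT else set0
  | s'.+1 =>
      if i == s' then Rtop lam1 lam2 z l u s
      else if (i < s')%N then Rg lam1 lam2 z l u s' i `&` ~` Rtop lam1 lam2 z l u s
      else set0
  end.

(* Main.v *)
Require Import Defs.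
From HB Require Import structures.
From mathcomp Require Import all_boot all_order all_algebra.
From mathcomp Require Import all_classical all_reals ereal.
Import Order.TTheory GRing.Theory Num.Theory.
Local Open Scope classical_set_scope.
Local Open Scope ring_scope.
Local Open Scope ereal_scope.
Set Implicit Arguments. Unset Strict Implicit.
Lemma omega_ge0 (R : realType) (lam2 : R) (l u : nat -> R) j a :
  (0 <= lam2)%R -> 0 <= omega lam2 l u j a.
Proof.
move=> h; rewrite /omega; apply: adde_ge0.
  by rewrite lee_fin mulr_ge0.
by case: ifP => _ //; exact: leey.
Qed.

Lemma sumomega_ge0 (R : realType) (lam2 : R) (l u : nat -> R) m n a :
  (0 <= lam2)%R -> 0 <= \sum_(m <= j < n) omega lam2 l u j a.
Proof. by move=> h; apply: sume_ge0 => j _; exact: omega_ge0. Qed.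

Lemma Hobj_ge0 (R : realType) (lam1 lam2 : R) (z l u : nat -> R) s y :
  (0 <= lam1)%R -> (0 <= lam2)%R -> 0 <= Hobj lam1 lam2 z l u s y.
Proof.
move=> h1 h2; rewrite /Hobj; apply: adde_ge0.
  rewrite lee_fin; apply: addr_ge0.
    by apply: mulr_ge0; [rewrite invr_ge0 | apply: sumr_ge0 => j _; exact: sqr_ge0].
  by apply: mulr_ge0 => //; apply: sumr_ge0 => j _; exact: ler0n.
by apply: sume_ge0 => j _; exact: omega_ge0.
Qed.

Lemma H_ninfty (R : realType) (lam1 lam2 : R) (z l u : nat -> R) s :
  (0 <= lam1)%R -> (0 <= lam2)%R -> H lam1 lam2 z l u s != -oo.
Proof.
move=> h1 h2; rewrite /H; case: ifP => _ //.
suff : 0 <= ereal_inf [set Hobj lam1 lam2 z l u s y | y in [set: nat -> R]].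
  by case: (ereal_inf _).
apply/ereal_infP => _ [y _ <-]; exact: Hobj_ge0.
Qed.

Lemma eAC1 (R : realType) (a b c d e : \bar R) : a + b + (c + d) + e = a + c + e + (b + d).
Proof. by rewrite (addeACA a b c d) (addeAC (a + c)). Qed.

Lemma eAC2 (R : realType) (a b c d : \bar R) : a + b + (c + d) = a + c + b + d.
Proof. by rewrite (addeACA a b c d) addeA. Qed.

Definition cterm (R : realType) (lam2 : R) (z l u : nat -> R) (s : nat) (a : R) : \bar R :=
  (2^-1 * (a - z s) ^+ 2)%R%:E + omega lam2 l u s a.

Definition Pt (R : realType) (lam1 lam2 : R) (z l u : nat -> R) (s i : nat) (a : R) : \bar R :=
  (2^-1 * \sum_(i.+1 <= j < s.+1) (a - z j) ^+ 2)%R%:E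
  + \sum_(i.+1 <= j < s.+1) omega lam2 l u j a + lam1%:E.

Lemma cterm_ge0 (R : realType) (lam2 : R) (z l u : nat -> R) s a :
  (0 <= lam2)%R -> 0 <= cterm lam2 z l u s a.
Proof.
move=> h; apply: adde_ge0; last exact: omega_ge0.
by rewrite lee_fin; apply: mulr_ge0; [rewrite invr_ge0|exact: sqr_ge0].
Qed.

Lemma Pt_ge0 (R : realType) (lam1 lam2 : R) (z l u : nat -> R) s i a :
  (0 <= lam1)%R -> (0 <= lam2)%R -> 0 <= Pt lam1 lam2 z l u s i a.
Proof.
move=> h1 h2; apply: adde_ge0; last by rewrite lee_fin.
apply: adde_ge0; last exact: sumomega_ge0.
rewrite lee_fin; apply: mulr_ge0; first by rewrite invr_ge0.
by apply: sumr_ge0 => j _; exact: sqr_ge0.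
Qed.

Lemma P_eq (R : realType) (lam1 lam2 : R) (z l u : nat -> R) s i a :
  P lam1 lam2 z l u s i a = H lam1 lam2 z l u i + Pt lam1 lam2 z l u s i a.
Proof. by rewrite /P /Pt !addeA. Qed.

Lemma Pt_rec (R : realType) (lam1 lam2 : R) (z l u : nat -> R) s i a :
  (i <= s)%N ->
  Pt lam1 lam2 z l u s.+1 i a = Pt lam1 lam2 z l u s i a + cterm lam2 z l u s.+1 a.
Proof.
move=> his; rewrite /Pt /cterm !(big_nat_recr s.+1) //= mulrDr EFinD.
exact: eAC1.
Qed.

Lemma Pt_last (R : realType) (lam1 lam2 : R) (z l u : nat -> R) s a :
  Pt lam1 lam2 z l u s.+1 s a = lam1%:E + cterm lam2 z l u s.+1 a.
Proof. by rewrite /Pt /cterm !big_nat1 addeC. Qed.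

Lemma Hobj_rec (R : realType) (lam1 lam2 : R) (z l u : nat -> R) s y :
  (1 <= s)%N ->
  Hobj lam1 lam2 z l u s.+1 y = Hobj lam1 lam2 z l u s y
    + (2^-1 * (y s.+1 - z s.+1) ^+ 2 + lam1 * (y s != y s.+1)%:R)%R%:E
    + omega lam2 l u s.+1 (y s.+1).
Proof.
move=> hs; rewrite /Hobj (big_nat_recr s.+1 1 (fun j => (y j - z j) ^+ 2)%R) //.
rewrite (big_nat_recr s 1 (fun j => (y j != y j.+1)%:R)%R) //.
rewrite (big_nat_recr s.+1 1 (fun j => omega lam2 l u j (y j))) //=.
rewrite !mulrDr addrACA EFinD.
exact: eAC2.
Qed.

Lemma Hobj_ext (R : realType) (lam1 lam2 : R) (z l u : nat -> R) s y y' :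
  (forall j, (1 <= j <= s)%N -> y j = y' j) ->
  Hobj lam1 lam2 z l u s y = Hobj lam1 lam2 z l u s y'.
Proof.
move=> E; rewrite /Hobj.
congr (((_ * _ + _ * _)%R)%:E + _).
all: apply: eq_big_nat => j /andP[h1 h2].
- by rewrite E // h1.
- by rewrite !E // ?h1 ?(ltn_trans h1 h2) //=; apply: ltnW.
- by rewrite E // h1.
Qed.

Lemma Hobj_cst (R : realType) (lam1 lam2 : R) (z l u : nat -> R) s a :
  Hobj lam1 lam2 z l u s (fun _ => a) + lam1%:E = Pt lam1 lam2 z l u s 0 a.
Proof.
rewrite /Hobj /Pt; congr (_ + _ + _); congr (_%:E).
have -> : (\sum_(1 <= j < s) (a != a)%:R = 0 :> R)%R.
  by rewrite big1 // => j _; rewrite eqxx.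
by rewrite mulr0 ?add0r ?addr0.
Qed.

Lemma ge0_ninfty (R : realType) (x : \bar R) : 0 <= x -> x != -oo.
Proof. by case: x. Qed.

Lemma eAC3 (R : realType) (a b c d : \bar R) : a + (b + c) + d = a + (c + (b + d)).
Proof. by rewrite (addeC b c) !addeA. Qed.

Lemma Hobj_block (R : realType) (lam1 lam2 : R) (z l u : nat -> R)
  (h1 : (0 <= lam1)%R) (h2 : (0 <= lam2)%R) s i y a :
  (1 <= i)%N -> (i < s)%N ->
  Hobj lam1 lam2 z l u s (fun j => if (j <= i)%N then y j else a)
    <= Hobj lam1 lam2 z l u i y + Pt lam1 lam2 z l u s i a.
Proof.
move=> hi; elim: s => [//|s IH] his.
have ext : Hobj lam1 lam2 z l u i (fun j => if (j <= i)%N then y j else a)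
    = Hobj lam1 lam2 z l u i y.
  by apply: Hobj_ext => j /andP[_ hj]; rewrite hj.
have s1 : (1 <= s)%N by apply: leq_trans hi _; rewrite -ltnS.
rewrite Hobj_rec //.
move: his; rewrite ltnS leq_eqVlt => /orP[/eqP eis | lis].
- rewrite -eis ext /= leqnn ltnn Pt_last /cterm.
  rewrite -addeA; apply: leeD2l.
  rewrite [X in _ <= X]addeA -EFinD (addrC lam1); apply: leeD2r.
  rewrite lee_fin lerD2l.
  by case: (_ != _); rewrite ?mulr1 ?mulr0.
- rewrite Pt_rec ?(ltnW lis) //.
  rewrite (_ : (if (s < i)%N then y s.+1 else a) = a); last by rewrite ltnNge (ltnW lis).
  rewrite (_ : (if (s <= i)%N then y s else a) = a); last by rewrite leqNgt lis.
  rewrite eqxx mulr0 addr0 -addeA [X in _ <= X]addeA; apply: leeD; first exact: IH.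
  by rewrite /cterm.
Qed.

Lemma P0_eq (R : realType) (lam1 lam2 : R) (z l u : nat -> R) s a :
  P lam1 lam2 z l u s 0 a = Hobj lam1 lam2 z l u s (fun _ => a).
Proof.
by rewrite P_eq -Hobj_cst /H /= addeCA -EFinD addNr adde0.
Qed.

Lemma HsE (R : realType) (lam1 lam2 : R) (z l u : nat -> R) s :
  (1 <= s)%N ->
  H lam1 lam2 z l u s = ereal_inf [set Hobj lam1 lam2 z l u s y | y in [set: nat -> R]].
Proof. by case: s. Qed.

Lemma H_le_P (R : realType) (lam1 lam2 : R) (z l u : nat -> R)
  (h1 : (0 <= lam1)%R) (h2 : (0 <= lam2)%R) s i a :
  (i < s)%N -> H lam1 lam2 z l u s <= P lam1 lam2 z l u s i a.
Proof.
move=> his; have s1 : (1 <= s)%N by apply: leq_trans his.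
case: i his => [|i] his.
  rewrite P0_eq HsE //; apply: ereal_inf_lbound; by exists (fun _ => a).
rewrite P_eq.
have := Pt_ge0 z l u s i.+1 a h1 h2.
case E: (Pt lam1 lam2 z l u s i.+1 a) => [k| |] // _.
- rewrite -leeBlDr // (HsE lam1 lam2 z l u (isT : (1 <= i.+1)%N)).
  apply/ereal_infP => _ [y _ <-].
  rewrite leeBlDr // -E.
  apply: le_trans (Hobj_block z l u h1 h2 y a _ his) => //.
  rewrite HsE //; apply: ereal_inf_lbound; by eexists.
- by rewrite addey ?H_ninfty // leey.
Qed.

Lemma exists_P_le (R : realType) (lam1 lam2 : R) (z l u : nat -> R)
  (h1 : (0 <= lam1)%R) (h2 : (0 <= lam2)%R) s y :
  (1 <= s)%N -> exists2 i, (i < s)%N &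
    P lam1 lam2 z l u s i (y s) <= Hobj lam1 lam2 z l u s y.
Proof.
elim: s => [//|s IH] _.
case: s IH => [|s] IH.
  exists 0%N => //; rewrite P0_eq.
  rewrite (@Hobj_ext _ _ _ _ _ _ _ y (fun _ => y 1%N)) //.
  by move=> j; rewrite -eqn_leq => /eqP <-.
have [i his hP] := IH isT.
rewrite Hobj_rec //.
case: (eqVneq (y s.+1) (y s.+2)) => e.
- exists i; first exact: leqW.
  rewrite P_eq Pt_rec ?(ltnW his) // addeA -P_eq -e.
  rewrite (_ : (~~ true)%:R = 0 :> R)%R // mulr0 addr0.
  rewrite -(addeA (Hobj _ _ _ _ _ _ _)); apply: leeD => //; by rewrite /cterm.
- exists s.+1 => //.
  rewrite P_eq Pt_last (_ : (~~ false)%:R = 1 :> R)%R // mulr1 /cterm EFinD eAC3.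
  apply: leeD2r; rewrite HsE //; apply: ereal_inf_lbound; by exists y.
Qed.

Lemma bigmin_le (R : realType) (F : nat -> \bar R) s i :
  (i < s)%N -> \big[Order.min/+oo]_(0 <= j < s) F j <= F i.
Proof.
elim: s => [//|s IH] his; rewrite big_nat_recr //= ge_min.
move: his; rewrite ltnS leq_eqVlt => /orP[/eqP -> | h].
  by rewrite lexx orbT.
by rewrite IH.
Qed.

Lemma le_bigmin (R : realType) (F : nat -> \bar R) s x :
  (forall i, (i < s)%N -> x <= F i) -> x <= \big[Order.min/+oo]_(0 <= j < s) F j.
Proof.
elim: s => [|s IH] h; first by rewrite big_geq // leey.
rewrite big_nat_recr //= le_min IH ?h // => i hi; apply: h; exact: leqW.
Qed.

Lemma min_addr (R : realType) (A B c : \bar R) :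
  Order.min (A + c) (B + c) = Order.min A B + c.
Proof.
case: (leP A B) => h.
  by rewrite (@min_l _ (\bar R)) //; apply: leeD2r.
have h' := ltW h.
by rewrite (@min_r _ (\bar R)) //; apply: leeD2r.
Qed.

Lemma bigmin_addr (R : realType) (F : nat -> \bar R) m c : c != -oo ->
  \big[Order.min/+oo]_(0 <= i < m) (F i + c)
  = \big[Order.min/+oo]_(0 <= i < m) F i + c.
Proof.
move=> hc; elim: m => [|m IH]; first by rewrite !big_geq // addye.
by rewrite !big_nat_recr //= IH min_addr.
Qed.

Lemma Pstar_rec (R : realType) (lam1 lam2 : R) (z l u : nat -> R)
  (h1 : (0 <= lam1)%R) (h2 : (0 <= lam2)%R) s a : (1 <= s)%N ->
  Pstar lam1 lam2 z l u s.+1 a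
  = Order.min (Pstar lam1 lam2 z l u s a) (H lam1 lam2 z l u s + lam1%:E)
    + cterm lam2 z l u s.+1 a.
Proof.
move=> hs; rewrite /Pstar big_nat_recr //=.
under eq_big_nat => i /andP[_ hi] do rewrite P_eq Pt_rec ?(ltnW hi) // addeA -P_eq.
rewrite bigmin_addr; last by apply: ge0_ninfty; exact: cterm_ge0.
by rewrite P_eq Pt_last (addeA (H lam1 lam2 z l u s)) min_addr.
Qed.

Lemma H_inf (R : realType) (lam1 lam2 : R) (z l u : nat -> R)
  (h1 : (0 <= lam1)%R) (h2 : (0 <= lam2)%R) s : (1 <= s)%N ->
  ereal_inf (range (Pstar lam1 lam2 z l u s)) = H lam1 lam2 z l u s.
Proof.
move=> hs; apply/eqP; rewrite eq_le; apply/andP; split.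
- rewrite HsE //; apply/ereal_infP => _ [y _ <-].
  have [i hi hP] := exists_P_le z l u h1 h2 y hs.
  apply: (le_trans _ hP).
  apply: (@le_trans _ _ (Pstar lam1 lam2 z l u s (y s))).
    by apply: ereal_inf_lbound; exists (y s).
  exact: bigmin_le.
- apply/ereal_infP => _ [a _ <-].
  by apply: le_bigmin => i hi; exact: H_le_P.
Qed.

Lemma Rg_lt (R : realType) (lam1 lam2 : R) (z l u : nat -> R) s i a :
  Rg lam1 lam2 z l u s i a -> (i < s)%N.
Proof.
case: s => [[]|[|s]] /=.
  by case: eqP => [->|_ []].
case: eqP => [-> //|_].
by case: ifP => [h _| _ []]; exact: leqW.
Qed.

Lemma Rg_cover (R : realType) (lam1 lam2 : R) (z l u : nat -> R) s a :
  (1 <= s)%N -> exists2 i, (i < s)%N & Rg lam1 lam2 z l u s i a.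
Proof.
elim: s => [//|s IH] _.
case: s IH => [|s] IH; first by exists 0%N.
have [i hi Hi] := IH isT.
case: (pselect (Rtop lam1 lam2 z l u s.+2 a)) => ht.
  by exists s.+1 => //=; rewrite eqxx.
exists i; first exact: leqW.
by rewrite /= (ltn_eqF hi) hi.
Qed.

Lemma Rg_uniq (R : realType) (lam1 lam2 : R) (z l u : nat -> R) s i j a :
  Rg lam1 lam2 z l u s i a -> Rg lam1 lam2 z l u s j a -> i = j.
Proof.
elim: s i j => [|s IH] i j; first by case.
case: s IH => [|s] IH /=.
  by case: eqP => [->|_ []]; case: eqP => [->|_ []].
case: (eqVneq i s.+1) => [->|ni]; case: (eqVneq j s.+1) => [->|nj] //.
- by move=> Ht; case: ifP => _ [] _ /(_ Ht).
- by case: ifP => _ [] _ Hn Ht; case: (Hn Ht).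
- case: ifP => _ [] Hi _; case: ifP => _ [] Hj _.
  exact: IH Hi Hj.
Qed.

Theorem proposition3p4 (R : realType) (n : nat) (z l u : nat -> R)
  (lam1 lam2 : R) (hlam1 : (0 < lam1)%R) (hlam2 : (0 < lam2)%R)
  (hlu : forall i, (1 <= i <= n)%N -> (l i <= 0)%R /\ (0 <= u i)%R) :
  (* (i) *)
  ((forall a : R, Pstar lam1 lam2 z l u 1 a
      = (2^-1 * (a - z 1%N) ^+ 2)%R%:E + omega lam2 l u 1 a) /\
   (forall s : nat, (2 <= s <= n)%N -> forall a : R,
      Pstar lam1 lam2 z l u s a
      = Order.min (Pstar lam1 lam2 z l u s.-1 a)
          (ereal_inf (range (Pstar lam1 lam2 z l u s.-1)) + lam1%:E)
        + (2^-1 * (a - z s) ^+ 2)%R%:E + omega lam2 l u s a)) /\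
  (* (ii)(a) *)
  (forall s : nat, (2 <= s <= n)%N ->
     \bigcup_(i in `I_s) Rg lam1 lam2 z l u s i = setT /\
     (forall i j : nat, (i < s)%N -> (j < s)%N -> i <> j ->
        Rg lam1 lam2 z l u s i `&` Rg lam1 lam2 z l u s j = set0)) /\
  (* (ii)(b) *)
  (forall s i : nat, (1 <= s <= n)%N -> (i < s)%N -> forall a : R,
     Rg lam1 lam2 z l u s i a ->
     Pstar lam1 lam2 z l u s a = P lam1 lam2 z l u s i a).
Proof.
have h1 : (0 <= lam1)%R by exact: ltW.
have h2 : (0 <= lam2)%R by exact: ltW.
split; [split|split].
- move=> a; rewrite /Pstar big_nat1 P0_eq /Hobj !big_nat1 big_geq //.
  by rewrite mulr0 addr0.
- move=> s /andP[h2s _] a; case: s h2s => [|[|s]] // _.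
  by rewrite Pstar_rec // H_inf // /cterm addeA.
- move=> s /andP[h2s _]; split.
    apply/seteqP; split => // a _.
    have [i hi Hi] := Rg_cover lam1 lam2 z l u a (ltnW h2s).
    by exists i.
  move=> i j hi hj nij; apply/seteqP; split => // a [Hi Hj].
  exact: nij (Rg_uniq Hi Hj).
- move=> s i /andP[h1s _]; elim: s h1s i => [//|s IH] _ i hi a.
  case: s IH hi => [|s] IH hi.
    by move: hi; rewrite ltnS leqn0 => /eqP -> _; rewrite /Pstar big_nat1.
  rewrite /= Pstar_rec //.
  case: (eqVneq i s.+1) => [-> | ni] Ha.
    rewrite /Rtop /= H_inf // in Ha.
    by rewrite (@min_r _ (\bar R)) // P_eq Pt_last (addeA (H _ _ _ _ _ s.+1)).
  move: Ha => /=; case: ifP => [hi' [Hr Hn] | _ []].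
  rewrite /Rtop /= H_inf // in Hn.
  have hlt : Pstar lam1 lam2 z l u s.+1 a < H lam1 lam2 z l u s.+1 + lam1%:E.
    by rewrite ltNge; apply/negP.
  rewrite (@min_l _ (\bar R)) ?(ltW hlt) // (IH isT i hi' a Hr).
  by rewrite [RHS]P_eq Pt_rec ?(ltnW hi') // (addeA (H _ _ _ _ _ i)) -P_eq.
Qed.
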